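(* Let $K$ be a finite field, $G$ a finite group and $C$ a checkable right ideal of $KG$. Then there exists $u\in KG$ such that the dual module $C^*$ is isomorphic, as a right $KG$-module, to $KG/uKG$.
   Context: A right ideal $I\le KG$ is called checkable if there is $v\in KG$ with $I=\{a\in KG: va=0\}$. For a right $KG$-module $M$, the dual module $M^*=\operatorname{Hom}_K(M,K)$ is the right $KG$-module with $(\varphi g)(m)=\varphi(mg^{-1})$ for $\varphi\in M^*$, $g\in G$, $m\in M$. *)

(* Defs.v *)
From HB Require Import structures.
From mathcomp Require Import all_boot all_order all_algebra all_fingroup all_field.
Set Implicit Arguments. Unset Strict Implicit. Unset Printing Implicit Defensive.
Import GRing.Theory.
Local Open Scope ring_scope.

(* The group algebra KG of a finite group G (= the whole finGroupType gT)
   over a field K: elements are functions G -> K, a = \sum_g a(g) g. *)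
Notation grpalg K gT := {ffun gT -> K}.

Section GroupAlgebra.
Variables (K : fieldType) (gT : finGroupType).

Definition ga_mul (a b : grpalg K gT) : grpalg K gT :=
  [ffun g => \sum_(h : gT) a h * b (h^-1 * g)%g].

Definition ga_scale (k : K) (a : grpalg K gT) : grpalg K gT :=
  [ffun g => k * a g].

Definition ga_elt (g : gT) : grpalg K gT := [ffun h => (h == g)%:R].

Definition right_ideal (I : pred (grpalg K gT)) : Prop :=
  [/\ 0 \in I,
      (forall a b, a \in I -> b \in I -> a + b \in I) &
      (forall a b, a \in I -> ga_mul a b \in I)].

Definition checkable (I : pred (grpalg K gT)) : Prop :=
  right_ideal I /\ exists v : grpalg K gT, forall a, (a \in I) <-> ga_mul v a = 0.

(* K-linear functionals on the subspace C of KG, represented by functions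
   KG -> K whose restriction to C is K-linear (two such represent the same
   element of C^* = Hom_K(C,K) iff they agree on C). *)
Definition lin_on (C : pred (grpalg K gT)) (phi : grpalg K gT -> K) : Prop :=
  forall k x y, x \in C -> y \in C ->
    phi (ga_scale k x + y) = k * phi x + phi y.

Definition dual_act (phi : grpalg K gT -> K) (g : gT) : grpalg K gT -> K :=
  fun m => phi (ga_mul m (ga_elt g^-1)).

(* C^* is isomorphic, as a right KG-module, to KG/uKG:
   there is a map F : KG -> C^* which is K-linear and KG-linear
   (equivalently: linear and compatible with right multiplication by group
   elements), surjective onto C^*, and such that F a = F b in C^*
   iff a + uKG = b + uKG.  I.e. F induces a bijective module map
   KG/uKG -> C^*. *)
Definition dual_iso_cyclic_quotient (C : pred (grpalg K gT)) (u : grpalg K gT)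
  : Prop :=
  exists F : grpalg K gT -> (grpalg K gT -> K),
  [/\ forall a, lin_on C (F a),
      forall k a b x, x \in C -> F (ga_scale k a + b) x = k * F a x + F b x,
      forall a g x, x \in C -> F (ga_mul a (ga_elt g)) x = dual_act (F a) g x,
      forall phi, lin_on C phi -> exists a, forall x, x \in C -> F a x = phi x
    & forall a b, (forall x, x \in C -> F a x = F b x) <->
                  exists c, a - b = ga_mul u c].

End GroupAlgebra.

(* Main.v *)
Require Import Defs.
From HB Require Import structures.
From mathcomp Require Import all_boot all_order all_algebra all_fingroup all_field.
Set Implicit Arguments. Unset Strict Implicit. Unset Printing Implicit Defensive.
Import GRing.Theory.
Local Open Scope ring_scope.

Section S.
Variables (K : fieldType) (gT : finGroupType).
Local Notation n := #|gT|.
Local Notation KG := {ffun gT -> K}.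

Definition rv (a : KG) : 'rV[K]_n := \row_i a (enum_val i).
Definition vr (w : 'rV[K]_n) : KG := [ffun g => w 0 (enum_rank g)].

Lemma rvK : cancel rv vr.
Proof. by move=> a; apply/ffunP=> g; rewrite ffunE mxE enum_rankK. Qed.
Lemma vrK : cancel vr rv.
Proof. by move=> w; apply/rowP=> i; rewrite mxE ffunE enum_valK. Qed.

Definition Mx (v : KG) : 'M[K]_n :=
  \matrix_(i, j) v (enum_val j * (enum_val i)^-1)%g.

Lemma sum_gT (F : gT -> K) : \sum_(g : gT) F g = \sum_(i < n) F (enum_val i).
Proof. by rewrite (reindex _ (onW_bij _ (@enum_val_bij gT))). Qed.

Lemma rv_mul v x : rv (ga_mul v x) = rv x *m Mx v.
Proof.
apply/rowP=> j; rewrite !mxE ffunE.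
set g := enum_val j.
rewrite (reindex_inj (inj_comp (mulgI g) invg_inj)) /=.
rewrite sum_gT; apply: eq_bigr => i _.
by rewrite !mxE invMg invgK mulgKV mulrC.
Qed.


Definition Fd (a : KG) (x : KG) : K := \sum_(g : gT) a g * x g.

Lemma Fd_mx a x : Fd a x = (rv a *m (rv x)^T) 0 0.
Proof. by rewrite /Fd sum_gT !mxE; apply: eq_bigr => i _; rewrite !mxE. Qed.

Lemma FdB a b x : Fd (a - b) x = Fd a x - Fd b x.
Proof.
by rewrite /Fd -sumrB; apply: eq_bigr => g _; rewrite !ffunE mulrBl.
Qed.

Definition hatv (v : KG) : KG := [ffun g => v g^-1%g].

Lemma Mx_hat v : Mx (hatv v) = (Mx v)^T.
Proof. by apply/matrixP=> i j; rewrite !mxE ffunE invMg invgK. Qed.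

Lemma kerker m p (A : 'M[K]_(m, p)) : (kermx (kermx A)^T <= A^T)%MS.
Proof.
have sub : (A^T <= kermx (kermx A)^T)%MS.
  by apply/sub_kermxP; rewrite -trmx_mul mulmx_ker trmx0.
rewrite -(mxrank_leqif_sup sub).
rewrite mxrank_ker !mxrank_tr mxrank_ker subKn ?rank_leq_row //.
Qed.

Lemma ga_mul_elt (a : KG) g : ga_mul a (ga_elt K g) = [ffun h => a (h * g^-1)%g].
Proof.
apply/ffunP=> h; rewrite !ffunE (bigD1 (h * g^-1)%g) //= big1.
  by rewrite !ffunE invMg invgK mulgKV eqxx mulr1 addr0.
move=> k nk; rewrite ffunE.
case: eqP => [e|]; last by rewrite mulr0.
by case/eqP: nk; rewrite -e invMg invgK mulKVg.
Qed.

Lemma vr_lin c w w' : vr (c *: w + w') = ga_scale c (vr w) + vr w'.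
Proof. by apply/ffunP=> g; rewrite !ffunE !mxE. Qed.

Lemma phi_sum (M : 'M[K]_n) (P : pred KG) (phi : KG -> K) :
  lin_on P phi -> (forall w, w *m M = 0 -> vr w \in P) ->
  forall (I : Type) (s : seq I) (c : I -> K) (w : I -> 'rV[K]_n),
  (forall i, w i *m M = 0) ->
  phi (vr (\sum_(i <- s) c i *: w i)) = \sum_(i <- s) c i * phi (vr (w i)).
Proof.
move=> Hl HP I s c w Hw; elim: s => [|i s IH].
  rewrite !big_nil.
  have h : phi (vr 0) = phi (vr 0) + phi (vr 0).
    have h0 : vr 0 \in P by apply: HP; rewrite mul0mx.
    have := Hl 1 _ _ h0 h0; rewrite mul1r => <-.
    by congr phi; apply/ffunP=> g; rewrite !ffunE !mxE mul1r addr0.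
  by apply: (addrI (phi (vr 0))); rewrite addr0 -h.
rewrite !big_cons vr_lin Hl ?HP ?IH //.
by rewrite mulmx_suml big1 // => j _; rewrite -scalemxAl Hw scaler0.
Qed.

End S.

Theorem mainTheorem5 (K : finFieldType) (gT : finGroupType)
  (C : {set {ffun gT -> K}}) :
  checkable (mem C) ->
  exists u : {ffun gT -> K}, dual_iso_cyclic_quotient (mem C) u.
Proof.
move=> [_ [v Hv]].
set M := Mx v.
have inC : forall x, (x \in mem C) <-> rv x *m M = 0.
  move=> x; rewrite -rv_mul; split=> [/Hv ->|h].
    by apply/rowP=> i; rewrite !mxE ffunE.
  apply/Hv; apply: (can_inj (@rvK _ _)); rewrite h.
  by apply/rowP=> i; rewrite !mxE ffunE.
have HP : forall w, w *m M = 0 -> vr w \in mem C.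
  by move=> w hw; apply/inC; rewrite vrK.
exists (hatv v), (@Fd _ _); split.
- move=> a k x y _ _; rewrite /Fd big_distrr -big_split; apply: eq_bigr => g _.
  by rewrite !ffunE mulrDr mulrCA.
- move=> k a b x _; rewrite /Fd big_distrr -big_split; apply: eq_bigr => g _.
  by rewrite !ffunE mulrDl -mulrA.
- move=> a g x _; rewrite /dual_act !ga_mul_elt /Fd.
  rewrite (reindex_inj (mulIg g)) /=; apply: eq_bigr => h _.
  by rewrite !ffunE mulgK invgK.
- move=> phi Hphi.
  set B := row_base (kermx M).
  pose y := \row_i phi (vr (row i B)).
  have fB : row_full B^T by rewrite /row_full mxrank_tr; exact: row_base_free.
  have Ey := mulmxKpV (submx_full y fB).
  exists (vr (y *m pinvmx B^T)) => x xC.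
  have : (rv x <= B)%MS by rewrite eq_row_base; apply/sub_kermxP/inC.
  case/submxP=> c Ec.
  rewrite Fd_mx vrK Ec (trmx_mul c B) (mulmxA (y *m pinvmx B^T)) Ey -(rvK x) Ec (mulmx_sum_row c B).
  rewrite (phi_sum Hphi HP); last first.
    move=> i; apply/(@sub_kermxP _ 1).
    by apply: submx_trans (row_sub i B) _; rewrite /B eq_row_base.
  rewrite mxE; apply: eq_bigr => i _.
  by rewrite !mxE mulrC.
- move=> a b; split.
  + move=> H.
    have : (rv (a - b) <= (Mx v)^T)%MS.
      apply: submx_trans (kerker _).
      apply/sub_kermxP/rowP=> i.
      have hr : row i (kermx M) *m M = 0 by rewrite -row_mul mulmx_ker row0.
      have := H _ (HP _ hr) => /eqP; rewrite -subr_eq0 -FdB Fd_mx vrK => /eqP E.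
      rewrite [RHS]mxE -E !mxE; apply: eq_bigr => j _; rewrite !mxE.
      done.
    case/submxP=> D ED; exists (vr D).
    by apply: (can_inj (@rvK _ _)); rewrite rv_mul vrK Mx_hat ED.
  + move=> [c Ec] x xC.
    apply/eqP; rewrite -subr_eq0 -FdB Ec Fd_mx rv_mul Mx_hat -mulmxA -trmx_mul.
    by move/inC: xC; rewrite /M => ->; rewrite trmx0 mulmx0 mxE.
Qed.
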